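(* Let $G_1$ and $G_2$ be graphs on $n$ nodes with Laplacian matrices $Q_1,Q_2$, and for $p\ge0$ let $$Q(p)=\begin{bmatrix} Q_1+pnI & -pJ\\ -pJ & Q_2+pnI\end{bmatrix},$$ where $J$ is the $n\times n$ all-one matrix (an $n$-to-$n$ interconnection), with eigenvalues $0=\mu_N(p)\le\mu_{N-1}(p)\le\dots\le\mu_1(p)$, $N=2n$. Define $p^*=\sup\big(\{0\}\cup\{p>0:\ \mu_{N-1}(p)=2np\}\big)$. Then $$p^*=\min\left\{\frac{\mu_{n-1}(Q_1)}{n},\ \frac{\mu_{n-1}(Q_2)}{n}\right\},$$ where $\mu_{n-1}(Q_i)$ is the second smallest eigenvalue of $Q_i$.
   Context: $2np$ is an eigenvalue of $Q(p)$ with eigenvector $[u^T,-u^T]^T$, $u$ the all-one vector; $p^*$ is the structural transition threshold, described in the paper as the coupling beyond which the algebraic connectivity $\mu_{N-1}$ no longer equals $2np$ (formalized here as the supremum). *)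

(* Defs.v *)
From HB Require Import structures.
From mathcomp Require Import all_boot all_order all_algebra.
From mathcomp Require Import classical_sets reals.
Set Implicit Arguments. Unset Strict Implicit. Unset Printing Implicit Defensive.
Import Order.TTheory GRing.Theory Num.Theory.
Local Open Scope ring_scope.
Local Open Scope classical_set_scope.

Definition simple_graph (n : nat) (e : rel 'I_n) : Prop :=
  symmetric e /\ irreflexive e.

Definition laplacian (R : realType) (n : nat) (e : rel 'I_n) : 'M[R]_n :=
  \matrix_(i, j) (if i == j then (#|[set k | e i k]|)%:R
                  else if e i j then -1 else 0).

(* For real
   symmetric matrices such a list exists and is unique up to permutation. *)
Definition eigvals (R : realType) (n : nat) (A : 'M[R]_n) : seq R :=
  sort <=%R (xget [::] [set s : seq R | char_poly A = \prod_(x <- s) ('X - x%:P)]).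

(* Second smallest eigenvalue (mu_{n-1} in the paper's decreasing indexing). *)
Definition second_smallest_eig (R : realType) (n : nat) (A : 'M[R]_n) : R :=
  nth 0 (eigvals A) 1.

Definition coupled_laplacian (R : realType) (n : nat) (Q1 Q2 : 'M[R]_n) (p : R)
  : 'M[R]_(n + n) :=
  block_mx (Q1 + (p * n%:R)%:M) (const_mx (- p))
           (const_mx (- p)) (Q2 + (p * n%:R)%:M).

Definition transition_threshold (R : realType) (n : nat) (Q1 Q2 : 'M[R]_n) : R :=
  sup ([set 0] `|` [set p : R | 0 < p /\
         second_smallest_eig (coupled_laplacian Q1 Q2 p) = 2 * n%:R * p]).

(* Main.v *)
Require Import Defs.
From HB Require Import structures.
From mathcomp Require Import all_boot all_order all_algebra.
From mathcomp Require Import boolp classical_sets reals.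
From mathcomp Require Import complex sesquilinear spectral.
From mathcomp Require Import ring lra.
Import Order.TTheory GRing.Theory Num.Theory.
Local Open Scope ring_scope.

Lemma horner_char (F : fieldType) n (A : 'M[F]_n) a :
  (char_poly A).[a] = \det (a%:M - A).
Proof.
rewrite /char_poly -horner_evalE -det_map_mx; congr (\det _).
apply/matrixP => i j; rewrite !mxE /horner_eval.
by rewrite rmorphB rmorphMn /= !horner_evalE hornerX hornerC.
Qed.

Lemma det_rank1 (F : fieldType) n (u : 'cV[F]_n) (v : 'rV[F]_n) :
  \det (1%:M + u *m v) = 1 + (v *m u) 0 0.
Proof.
have E1 : block_mx (1%:M + u *m v) u 0 1%:M *m block_mx 1%:M 0 (-v) 1%:M
          = block_mx 1%:M u (-v) (1%:M : 'M_1).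
  by rewrite mulmx_block !mulmx1 !mul0mx !mulmx0 !mul1mx !add0r mulmxN addrK.
have E2 : block_mx 1%:M 0 (-v) 1%:M *m block_mx 1%:M u 0 (1%:M + v *m u)
          = block_mx 1%:M u (-v) (1%:M : 'M_1).
  by rewrite mulmx_block !mulmx1 !mul0mx !mulmx0 !mul1mx !addr0 mulNmx addrCA addNr addr0.
have := congr1 (@determinant _ _) (etrans E1 (esym E2)).
rewrite !det_mulmx det_ublock det_lblock det_ublock !det1 !mulr1 mul1r.
by rewrite det_mx11 !mxE mul1r eqxx => ->.
Qed.

Lemma poly_eq_off (F : numFieldType) (P Q : {poly F}) c :
  (forall t, t != c -> P.[t] = Q.[t]) -> P = Q.
Proof.
move=> H; apply/eqP; rewrite -subr_eq0; apply/negPn/negP => D0.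
pose rs := [seq c + (i.+1)%:R | i <- iota 0 (size (P - Q)%R)].
have : (size rs < size (P - Q)%R)%N.
  apply: max_poly_roots => //.
    apply/allP => x /mapP [i _ ->]; rewrite /root hornerD hornerN H ?subrr //.
    by rewrite -subr_eq0 addrC addKr pnatr_eq0.
  rewrite map_inj_uniq ?iota_uniq // => i j /addrI /eqP.
  by rewrite eqr_nat eqSS => /eqP.
by rewrite size_map size_iota ltnn.
Qed.

Lemma coupled_det (R : realType) n (Q1 Q2 : 'M[R]_n) (p t : R) :
  Q1 *m (const_mx 1 : 'M_n) = 0 -> Q2 *m (const_mx 1 : 'M_n) = 0 -> t - p * n%:R != 0 ->
  (t - p * n%:R) ^+ 2 * \det (t%:M - coupled_laplacian Q1 Q2 p)
  = t * (t - 2 * p * n%:R) * \det ((t - p * n%:R)%:M - Q1)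
      * \det ((t - p * n%:R)%:M - Q2).
Proof.
move=> HQ1 HQ2; set s := t - p * n%:R => s0.
set J := const_mx 1 : 'M[R]_n.
set D1 := s%:M - Q1; set D2 := s%:M - Q2.
have HM : t%:M - coupled_laplacian Q1 Q2 p = block_mx D1 (p *: J) (p *: J) D2.
  rewrite /coupled_laplacian scalar_mx_block opp_block_mx add_block_mx.
  congr block_mx; apply/matrixP => i j; rewrite !mxE;
    try (case: eqP => _; rewrite ?mulr1n ?mulr0n); rewrite /s; ring.
have D1J : D1 *m J = s *: J by rewrite mulmxBl mul_scalar_mx HQ1 subr0.
have D2J : D2 *m J = s *: J by rewrite mulmxBl mul_scalar_mx HQ2 subr0.
have JJ : J *m J = n%:R *: J.
  apply/matrixP => i j; rewrite !mxE.
  under eq_bigr do rewrite !mxE mulr1.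
  by rewrite sumr_const card_ord mulr1.
set c := p ^+ 2 * n%:R.
have HE : block_mx D1 (p *: J) (p *: J) D2 *m block_mx s%:M (- p *: J) 0 s%:M
        = block_mx (s *: D1) 0 ((s * p) *: J) (s *: D2 - c *: J).
  rewrite mulmx_block !mulmx0 !addr0 !mul_mx_scalar.
  rewrite -!scalemxAr D1J -!scalemxAl JJ.
  congr block_mx; apply/matrixP => i j; rewrite !mxE; rewrite /c; ring.
have HK : s *: D2 - c *: J = D2 *m (s%:M - (c / s) *: J).
  by rewrite mulmxBr mul_mx_scalar -scalemxAr D2J scalerA divfK.
have HR1 : s%:M - (c / s) *: J
    = s *: (1%:M + const_mx (- (c / s / s)) *m (const_mx 1 : 'rV[R]_n)).
  apply/matrixP => i j; rewrite !mxE big_ord1 !mxE.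
  case: eqP => _; rewrite ?mulr1n ?mulr0n; field; exact: s0.
have Hsum : forall x : R, ((const_mx 1 : 'rV[R]_n) *m (const_mx x : 'cV[R]_n)) 0 0 = x *+ n.
  move=> x; rewrite !mxE (eq_bigr (fun=> x)) ?sumr_const ?card_ord // => j _.
  by rewrite !mxE mul1r.
have Hdet := congr1 (@determinant _ _) HE.
rewrite det_mulmx det_lblock det_ublock !det_scalar detZ HK det_mulmx HR1 in Hdet.
rewrite detZ det_rank1 in Hdet.
rewrite Hsum in Hdet.
have sn0 : s ^+ n != 0 by rewrite expf_neq0.
have Hd : \det (block_mx D1 (p *: J) (p *: J) D2)
   = \det D1 * \det D2 * (1 + (- (c / s / s)) *+ n).
  apply: (mulIf sn0); apply: (mulIf sn0).
  rewrite -mulrA Hdet; ring.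
rewrite HM Hd /c -mulr_natr.
by rewrite /s; field.
Qed.

Lemma coupled_char (R : realType) n (Q1 Q2 : 'M[R]_n) (p : R) (s1 s2 : seq R) :
  Q1 *m (const_mx 1 : 'M_n) = 0 -> Q2 *m (const_mx 1 : 'M_n) = 0 ->
  char_poly Q1 = \prod_(x <- s1) ('X - x%:P) ->
  char_poly Q2 = \prod_(x <- s2) ('X - x%:P) ->
  0 \in s1 -> 0 \in s2 ->
  char_poly (coupled_laplacian Q1 Q2 p) =
  \prod_(x <- 0 :: 2 * n%:R * p :: map (fun x => x + p * n%:R) (rem 0 s1 ++ rem 0 s2))
     ('X - x%:P).
Proof.
move=> HQ1 HQ2 C1 C2 i1 i2.
apply: (@poly_eq_off _ _ _ (p * n%:R)) => t ht.
have s0 : t - p * n%:R != 0 by rewrite subr_eq0.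
have s20 : (t - p * n%:R) ^+ 2 != 0 by rewrite expf_neq0.
apply: (mulfI s20).
rewrite horner_char coupled_det // -!horner_char C1 C2 !horner_prod.
rewrite (perm_big _ (perm_to_rem i1)) (perm_big _ (perm_to_rem i2)) /=.
rewrite !big_cons big_map big_cat /=.
rewrite !hornerXsubC.
have E : forall r, \prod_(x <- r) ('X - (x + p * n%:R)%:P).[t]
                 = \prod_(x <- r) ('X - x%:P).[t - p * n%:R].
  by move=> r; apply: eq_bigr => x _; rewrite !hornerXsubC; ring.
rewrite !E; ring.
Qed.

Lemma char_poly_conj (F : numFieldType) n (P D : 'M[F]_n) : P \in unitmx ->
  char_poly (invmx P *m D *m P) = char_poly D.
Proof.
move=> Pu; apply: (@poly_eq_off _ _ _ 0) => z _.
rewrite !horner_char.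
have -> : z%:M - invmx P *m D *m P = invmx P *m (z%:M - D) *m P.
  by rewrite mulmxBr mulmxBl mul_mx_scalar -scalemxAl mulVmx // scalemx1.
by rewrite !det_mulmx mulrC mulrA -det_mulmx mulmxV // det1 mul1r.
Qed.

Lemma real_sym_split (R : realType) n (A : 'M[R]_n) : A^T = A ->
  exists s : seq R, char_poly A = \prod_(x <- s) ('X - x%:P).
Proof.
move=> HA.
pose f := real_complex R.
pose Ac := map_mx f A.
have Asym : Ac \is symmetricmx.
  apply/is_hermitianmxP; rewrite expr0 scale1r; apply/matrixP => i j.
  by rewrite !mxE -[in LHS]HA mxE.
have Areal : Ac \is a realmx.
  by apply/mxOverP => i j; rewrite mxE; apply/complex_realP; eexists.
have Aherm := realsym_hermsym Asym Areal.
have /orthomx_spectralP E := hermitian_normalmx Aherm.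
have dreal := hermitian_spectral_diag_real Aherm.
set P := spectralmx Ac in E; set d := spectral_diag Ac in E dreal.
have cpAc : char_poly Ac = \prod_(i < n) ('X - (d 0 i)%:P).
  rewrite E char_poly_conj ?spectral_unit // char_poly_trig ?diag_mx_is_trig //.
  by apply: eq_bigr => i _; rewrite mxE eqxx mulr1n.
exists [seq complex.Re (d 0 i) | i <- enum 'I_n].
apply: (@map_poly_inj _ _ f).
rewrite map_char_poly cpAc rmorph_prod big_map big_enum /=.
apply: eq_bigr => i _; rewrite map_polyXsubC /=.
by rewrite RRe_real //; apply: (mxOverP dreal).
Qed.

Lemma deg_sum (R : realType) n (e : rel 'I_n) j :
  \sum_i ((e j i)%:R : R) = (#|[set k | e j k]|)%:R.
Proof.
rewrite -natr_sum; congr (_%:R).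
rewrite cardsE -sum1_card [RHS]big_mkcond; apply: eq_bigr => i _.
by rewrite unfold_in; case: (e j i).
Qed.

Lemma degc n (e : rel 'I_n) i :
  #|[set k | e i k]%classic| = #|[set k | e i k]|.
Proof.
apply: eq_card => k; rewrite [RHS]inE.
by apply/idP/idP => [/set_mem|H]; [|apply/mem_set].
Qed.

Lemma lapE (R : realType) n (e : rel 'I_n) : simple_graph e -> forall i j,
  laplacian R e i j = (i == j)%:R * (#|[set k | e i k]|)%:R - (e i j)%:R.
Proof.
move=> [_ irr] i j; rewrite mxE degc; case: eqP => [<-|_]; first by rewrite irr mul1r subr0.
by case: (e i j); rewrite mul0r sub0r ?mulr1n ?mulr0n ?oppr0.
Qed.

Lemma lap_sym (R : realType) n (e : rel 'I_n) : simple_graph e ->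
  (laplacian R e)^T = laplacian R e.
Proof.
move=> [sy irr]; apply/matrixP => i j; rewrite !mxE eq_sym (sy i j).
by case: eqP => // ->.
Qed.

Lemma lap_J (R : realType) n m (e : rel 'I_n) : simple_graph e ->
  laplacian R e *m (const_mx 1 : 'M_(n, m)) = 0.
Proof.
move=> he; apply/matrixP => i j; rewrite mxE [RHS]mxE.
under eq_bigr => k _ do rewrite [const_mx 1 k j]mxE mulr1 lapE //.
rewrite sumrB deg_sum (bigD1 i) //= eqxx mul1r big1 ?addr0 ?subrr //.
by move=> k /negbTE; rewrite eq_sym => ->; rewrite mul0r.
Qed.

Lemma lap_eig0 (R : realType) n (e : rel 'I_n) : simple_graph e -> (0 < n)%N ->
  root (char_poly (laplacian R e)) 0.
Proof.
move=> he n0; rewrite -eigenvalue_root_char.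
apply/eigenvalueP; exists (const_mx 1); last first.
  apply/eqP => /matrixP /(_ 0 (Ordinal n0)); rewrite !mxE => /eqP.
  by rewrite oner_eq0.
rewrite scale0r.
have -> : (const_mx 1 : 'rV[R]_n) *m laplacian R e
        = (laplacian R e *m (const_mx 1 : 'cV_n))^T.
  rewrite trmx_mul lap_sym //; congr (_ *m _).
  by apply/matrixP => i j; rewrite !mxE.
by rewrite lap_J // trmx0.
Qed.

Lemma lap_eig_ge0 (R : realType) n (e : rel 'I_n) (x : R) : simple_graph e ->
  root (char_poly (laplacian R e)) x -> 0 <= x.
Proof.
move=> he; rewrite -eigenvalue_root_char => /eigenvalueP [v Hv v0].
have [k vk] : exists k, v 0 k != 0.
  case: (pickP (fun k => v 0 k != 0)) => [k vk|H]; first by exists k.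
  case/eqP: v0; apply/matrixP => i j; rewrite ord1 !mxE.
  by move/negbFE: (H j) => /eqP.
case: (@Order.TotalTheory.arg_maxP _ _ _ k xpredT (fun j => `|v 0 j|) isT) => j _ Hj.
set d := (#|[set k | e j k]|)%:R : R.
have Hvj : 0 < `|v 0 j| by apply: lt_le_trans (Hj k isT); rewrite normr_gt0.
have /matrixP /(_ 0 j) Hrow := Hv; rewrite mxE [RHS]mxE in Hrow.
have Hsum : \sum_i v 0 i * laplacian R e i j
          = d * v 0 j - \sum_i v 0 i * (e j i)%:R.
  rewrite (eq_bigr (fun i => ((j == i)%:R * d) * v 0 i - v 0 i * (e j i)%:R)).
    rewrite sumrB (bigD1 j) //= eqxx mul1r big1 ?addr0 //.
    by move=> i /negbTE; rewrite eq_sym => ->; rewrite !mul0r.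
  move=> i _; rewrite -[laplacian R e]lap_sym // mxE lapE //.
  by rewrite mulrBr mulrC [v 0 i * _]mulrC.
have HS : \sum_i v 0 i * (e j i)%:R = (d - x) * v 0 j.
  by rewrite mulrBl -Hrow Hsum; ring.
have Hb : `|d - x| * `|v 0 j| <= d * `|v 0 j|.
  rewrite -normrM -HS; apply: le_trans (ler_norm_sum _ _ _) _.
  rewrite /d -deg_sum mulr_suml; apply: ler_sum => i _.
  rewrite normrM [`|(e j i)%:R|]ger0_norm ?ler0n // mulrC; apply: ler_wpM2l => //.
  exact: Hj.
rewrite ler_pM2r // in Hb.
have := ler_norm (d - x); lra.
Qed.

Lemma sort_head (R : realDomainType) (r : seq R) : r != [::] ->
  nth 0 (sort <=%R r) 0 \in r /\ forall z, z \in r -> nth 0 (sort <=%R r) 0 <= z.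
Proof.
move=> r0.
have Hs := sort_sorted (@le_total _ R) r.
have Hp : perm_eq (sort <=%R r) r by rewrite perm_sort.
move: Hs Hp; case E: (sort <=%R r) => [|y w].
  by move=> _ /perm_size/esym/eqP; rewrite size_eq0 (negbTE r0).
move=> /= Hs Hp; rewrite path_sortedE in Hs; last exact: le_trans.
case/andP: Hs => /allP Hall _.
split; first by rewrite -(perm_mem Hp) mem_head.
move=> z; rewrite -(perm_mem Hp) in_cons => /orP [/eqP ->|/Hall //].
exact: lexx.
Qed.

Lemma sort_cons_min (R : realDomainType) (l : seq R) x : x \in l ->
  (forall z, z \in l -> x <= z) -> sort <=%R l = x :: sort <=%R (rem x l).
Proof.
move=> xl Hx; apply: (sorted_eq le_trans le_anti).
- exact: sort_sorted (@le_total _ R) l.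
- rewrite /= path_sortedE; last exact: le_trans.
  rewrite sort_sorted ?andbT; last exact: le_total.
  apply/allP => z; rewrite mem_sort => /mem_rem; exact: Hx.
- have h1 : perm_eq (sort <=%R l) l by rewrite perm_sort.
  have h2 : perm_eq (sort <=%R (rem x l)) (rem x l) by rewrite perm_sort.
  apply: perm_trans h1 (perm_trans (perm_to_rem xl) _).
  by rewrite perm_cons perm_sym.
Qed.

Lemma lap_split (R : realType) n (e : rel 'I_n) : simple_graph e ->
  char_poly (laplacian R e) = \prod_(x <- xget [::] [set s : seq R |
     char_poly (laplacian R e) = \prod_(x <- s) ('X - x%:P)]%classic) ('X - x%:P).
Proof.
move=> he; have [s Hs] := @real_sym_split R n _ (@lap_sym R n e he).
by apply: (@xgetPex _ [::] [set s : seq R |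
     char_poly (laplacian R e) = \prod_(x <- s) ('X - x%:P)]%classic); exists s.
Qed.

Lemma lap_props (R : realType) n (e : rel 'I_n) (s : seq R) :
  simple_graph e -> (0 < n)%N ->
  char_poly (laplacian R e) = \prod_(x <- s) ('X - x%:P) ->
  [/\ 0 \in s, (forall x, x \in s -> 0 <= x) & size s = n].
Proof.
move=> he n0 E; split.
- by rewrite -root_prod_XsubC -E (@lap_eig0 R n e he n0).
- by move=> x xs; apply: (@lap_eig_ge0 R n e x he); rewrite E root_prod_XsubC.
- by have := size_char_poly (laplacian R e); rewrite E size_prod_XsubC => -[].
Qed.

Lemma second_props (R : realType) (s : seq R) :
  0 \in s -> (forall x, x \in s -> 0 <= x) -> (1 < size s)%N ->
  let m := nth 0 (sort <=%R s) 1 in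
  [/\ 0 <= m, m \in rem 0 s & forall z, z \in rem 0 s -> m <= z].
Proof.
move=> s0 sp ss m.
have Hm : m = nth 0 (sort <=%R (rem 0 s)) 0 by rewrite /m (@sort_cons_min R s 0 s0 sp).
have r0 : rem 0 s != [::].
  by rewrite -size_eq0 size_rem // -lt0n -ltnS prednK // (ltn_trans _ ss).
have [Hin Hle] := @sort_head R _ r0.
rewrite Hm; split => //; apply: sp; exact: (mem_rem Hin).
Qed.

Lemma coupled_iff_aux (R : realType) n (Q1 Q2 : 'M[R]_n) (p : R) (s1 s2 sc : seq R) :
  Q1 *m (const_mx 1 : 'M_n) = 0 -> Q2 *m (const_mx 1 : 'M_n) = 0 ->
  char_poly Q1 = \prod_(x <- s1) ('X - x%:P) ->
  char_poly Q2 = \prod_(x <- s2) ('X - x%:P) ->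
  char_poly (coupled_laplacian Q1 Q2 p) = \prod_(x <- sc) ('X - x%:P) ->
  0 \in s1 -> 0 \in s2 -> (forall x, x \in s1 -> 0 <= x) ->
  (forall x, x \in s2 -> 0 <= x) -> (1 < size s1)%N -> (1 < size s2)%N ->
  0 < p -> 0 < n%:R :> R ->
  (nth 0 (sort <=%R sc) 1 = 2 * n%:R * p) <->
  (p * n%:R <= nth 0 (sort <=%R s1) 1 /\ p * n%:R <= nth 0 (sort <=%R s2) 1).
Proof.
move=> HQ1 HQ2 C1 C2 Cc i1 i2 p1 p2 z1 z2 hp hn.
have HL := @coupled_char R n Q1 Q2 p s1 s2 HQ1 HQ2 C1 C2 i1 i2.
set T := 2 * n%:R * p :: map (fun x => x + p * n%:R) (rem 0 s1 ++ rem 0 s2) in HL.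
have Hperm : perm_eq sc (0 :: T) by apply: prod_XsubC_eq; rewrite -Cc HL.
have -> : sort <=%R sc = sort <=%R (0 :: T).
  by apply/perm_sortP => //; [exact: le_total | exact: le_trans | exact: le_anti].
have pn0 : 0 < p * n%:R by rewrite mulr_gt0.
have Tpos : forall z, z \in T -> 0 < z.
  move=> z; rewrite in_cons => /orP [/eqP ->|/mapP [y]].
    by rewrite -mulrA mulr_gt0 // mulrC.
  rewrite mem_cat => /orP [] /mem_rem Hy ->.
    by apply: ltr_wpDl => //; apply: p1.
  by apply: ltr_wpDl => //; apply: p2.
have -> : sort <=%R (0 :: T) = 0 :: sort <=%R T.
  rewrite (@sort_cons_min R (0 :: T) 0 (mem_head _ _)) /= ?eqxx //.
  by move=> z; rewrite in_cons => /orP [/eqP ->|/Tpos /ltW].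
rewrite /=.
have T0 : T != [::] by [].
have [hT hle] := @sort_head R T T0.
set h := nth 0 (sort <=%R T) 0 in hT hle *.
have [m1p m1in m1le] := @second_props R s1 i1 p1 z1.
have [m2p m2in m2le] := @second_props R s2 i2 p2 z2.
set m1 := nth 0 (sort <=%R s1) 1 in m1p m1in m1le *.
set m2 := nth 0 (sort <=%R s2) 1 in m2p m2in m2le *.
have T1 : m1 + p * n%:R \in T.
  by rewrite in_cons; apply/orP; right; apply: map_f; rewrite mem_cat m1in.
have T2 : m2 + p * n%:R \in T.
  by rewrite in_cons; apply/orP; right; apply: map_f; rewrite mem_cat m2in orbT.
have h1 := hle _ T1; have h2 := hle _ T2; have h0 := hle _ (mem_head _ _).
split.
  move=> Hh; rewrite Hh in h1 h2; split; lra.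
move=> [q1 q2].
move: hT; rewrite in_cons => /orP [/eqP //|/mapP [y]].
rewrite mem_cat => /orP [] /[dup] Hy /mem_rem _ Eh; rewrite Eh in h0 *.
  have := m1le _ Hy; lra.
have := m2le _ Hy; lra.
Qed.

Theorem mainTheorem4 (R : realType) (n : nat) (e1 e2 : rel 'I_n)
  (hn : (2 <= n)%N) (he1 : simple_graph e1) (he2 : simple_graph e2) :
  transition_threshold (laplacian R e1) (laplacian R e2) =
  Num.min (second_smallest_eig (laplacian R e1) / n%:R)
          (second_smallest_eig (laplacian R e2) / n%:R).
Proof.
have n0 : (0 < n)%N by apply: leq_trans hn.
have hn' : 0 < n%:R :> R by rewrite ltr0n.
have C1 := @lap_split R n e1 he1.
have C2 := @lap_split R n e2 he2.
have [i1 p1 z1] := @lap_props R n e1 _ he1 n0 C1.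
have [i2 p2 z2] := @lap_props R n e2 _ he2 n0 C2.
have z1' := hn; rewrite -{1}z1 in z1'.
have z2' := hn; rewrite -{1}z2 in z2'.
have HQ1 := @lap_J R n n e1 he1.
have HQ2 := @lap_J R n n e2 he2.
have key : forall p, 0 < p ->
  (second_smallest_eig (coupled_laplacian (laplacian R e1) (laplacian R e2) p)
     = 2 * n%:R * p <->
   p * n%:R <= second_smallest_eig (laplacian R e1) /\
   p * n%:R <= second_smallest_eig (laplacian R e2)).
  move=> p hp.
  have Cc : char_poly (coupled_laplacian (laplacian R e1) (laplacian R e2) p)
    = \prod_(x <- xget [::] [set s : seq R | char_poly (coupled_laplacian
          (laplacian R e1) (laplacian R e2) p) = \prod_(x <- s) ('X - x%:P)]%classic)
         ('X - x%:P).
    apply: (@xgetPex _ [::] [set s : seq R | char_poly (coupled_laplacian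
          (laplacian R e1) (laplacian R e2) p) = \prod_(x <- s) ('X - x%:P)]%classic).
    by eexists; apply: (@coupled_char R n _ _ p _ _ HQ1 HQ2 C1 C2 i1 i2).
  exact: (@coupled_iff_aux R n _ _ p _ _ _ HQ1 HQ2 C1 C2 Cc i1 i2 p1 p2 z1' z2' hp hn').
have [m1p _ _] := @second_props R _ i1 p1 z1'.
have [m2p _ _] := @second_props R _ i2 p2 z2'.
rewrite /transition_threshold.
set m1 := second_smallest_eig (laplacian R e1) in key *.
set m2 := second_smallest_eig (laplacian R e2) in key *.
have m1p' : 0 <= m1 by exact: m1p.
have m2p' : 0 <= m2 by exact: m2p.
set S := (X in sup X).
set M := Num.min (m1 / n%:R) (m2 / n%:R).
have M0 : 0 <= M by rewrite /M le_min !divr_ge0 ?ler0n.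
have Mub : ubound S M.
  move=> x [-> //|[xp /(key _ xp) [q1 q2]]].
  by rewrite /M le_min !ler_pdivlMr // q1 q2.
have MS : S M.
  have [->|Mp] := eqVneq M 0; first by left.
  right; split; first by rewrite lt_neqAle eq_sym Mp M0.
  apply/(key _ _).2; first by rewrite lt_neqAle eq_sym Mp M0.
  by rewrite -!ler_pdivlMr //; split; rewrite /M ge_min lexx ?orbT.
apply/le_anti/andP; split.
  by apply: ge_sup => //; exists 0; left.
by apply: sup_upper_bound => //; split; [exists M | exists M].
Qed.
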